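(* Let $f:[0,\infty)\to\mathbb{R}$ be convex with $f(1)=0$ and $G:[0,\mathsf{D_m}(f))\to[0,\infty)$ non-decreasing with $G(0)=0$, and suppose $(G,f)$ is divergence-subadditive. Let $p_X\ll q_X$ be distributions on a finite set $\mathcal{X}$. Consider testing $H_0: X^n\sim\prod_{i=1}^n p_X(x_i)$ against $H_1: X^n\sim\prod_{i=1}^n q_X(x_i)$ with a (possibly randomized) decision rule $U(X^n)\in\{0,1\}$, and let $\alpha=\Pr[U=1\mid H_0]$, $\beta=\Pr[U=1\mid H_1]$. Then $$G\big(D_f(\mathrm{Bern}(\alpha)\|\mathrm{Bern}(\beta))\big)\le n\,G\big(D_f(p_X\|q_X)\big).$$
   Context: For distributions $p\ll q$ on a finite set, $D_f(p\|q)=\sum_x q(x) f(p(x)/q(x))$ with $0f(0/0)=0$; $\mathsf{D_m}(f)=f(0)+\lim_{t\to\infty}f(t)/t$. $\mathrm{Bern}(a)$ is the distribution on $\{0,1\}$ assigning probability $a$ to $1$. $(G,f)$ is divergence-subadditive if for all finite sets $\mathcal{Y},\mathcal{Z}$ and distributions $q_Y\ll r_Y$, $q_Z\ll r_Z$: $G(D_f(q_Yq_Z\|r_Yr_Z))\le G(D_f(q_Y\|r_Y))+G(D_f(q_Z\|r_Z))$. *)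

(* Defs.v *)
From mathcomp Require Import all_boot all_order all_algebra.
From mathcomp Require Import all_classical all_reals all_analysis.
Set Implicit Arguments. Unset Strict Implicit. Unset Printing Implicit Defensive.
Import Order.TTheory GRing.Theory Num.Theory.
Local Open Scope ring_scope.

Section Defs.
Variable R : realType.

Definition convex_on_nonneg (f : R -> R) : Prop :=
  forall x y l : R, 0 <= x -> 0 <= y -> 0 <= l -> l <= 1 ->
    f (l * x + (1 - l) * y) <= l * f x + (1 - l) * f y.

Definition Dm (f : R -> R) : \bar R :=
  ((f 0)%:E + lim (((f t / t)%:E) @[t --> +oo%R])%classic)%E.

Definition is_dist (T : finType) (p : T -> R) : Prop :=
  (forall x, 0 <= p x) /\ \sum_(x : T) p x = 1.

Definition abs_cont (T : finType) (p q : T -> R) : Prop :=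
  forall x, q x = 0 -> p x = 0.

(* D_f(p||q) = sum_x q(x) f(p(x)/q(x)), with the convention 0 f(0/0) = 0 *)
Definition Df (f : R -> R) (T : finType) (p q : T -> R) : R :=
  \sum_(x : T) (if q x == 0 then 0 else q x * f (p x / q x)).

Definition prod_dist (Y Z : finType) (p : Y -> R) (q : Z -> R) : Y * Z -> R :=
  fun yz => p yz.1 * q yz.2.

Definition iid (T : finType) (n : nat) (p : T -> R) : {ffun 'I_n -> T} -> R :=
  fun xs => \prod_(i < n) p (xs i).

(* Bern(a) on {0,1} = bool, with probability a on 1 = true *)
Definition Bern (a : R) : bool -> R := fun b => if b then a else 1 - a.

Definition div_subadditive (G f : R -> R) : Prop :=
  forall (Y Z : finType) (qY rY : Y -> R) (qZ rZ : Z -> R),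
    is_dist qY -> is_dist rY -> is_dist qZ -> is_dist rZ ->
    abs_cont qY rY -> abs_cont qZ rZ ->
    G (Df f (prod_dist qY qZ) (prod_dist rY rZ))
      <= G (Df f qY rY) + G (Df f qZ rZ).
End Defs.

(* Main.v *)
Require Import Defs.
From mathcomp Require Import all_boot all_order all_algebra.
From mathcomp Require Import all_classical all_reals all_analysis.
From mathcomp Require Import ring lra.
Import Order.TTheory GRing.Theory Num.Theory.
Import numFieldNormedType.Exports.
Local Open Scope ring_scope.

Section S.
Variable R : realType.
Variable f : R -> R.
Hypothesis hfconv : convex_on_nonneg f.

Lemma slope_mono a b : 0 < a -> a <= b -> (f a - f 0) / a <= (f b - f 0) / b.
Proof.
move=> a0 ab; have b0 : 0 < b by apply: lt_le_trans ab.
have l0 : 0 <= a / b by rewrite divr_ge0 // ltW.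
have l1 : a / b <= 1 by rewrite ler_pdivrMr // mul1r.
have := hfconv b 0 (a/b) (ltW b0) (le_refl 0) l0 l1.
rewrite mulr0 addr0 divfK ?gt_eqF // => h.
rewrite ler_pdivrMr // mulrAC ler_pdivlMr //.
have hb : f a * b <= (a / b * f b + (1 - a / b) * f 0) * b by rewrite ler_wpM2r // ltW.
have e :  (a / b * f b + (1 - a / b) * f 0) * b = a * f b + (b - a) * f 0.
  by field; rewrite gt_eqF.
rewrite e in hb; rewrite !mulrBl in hb *; lra.
Qed.

Lemma Dm_ge T : 1 <= T -> ((f 0 + (f T - f 0) / T)%:E <= Dm f)%E.
Proof.
move=> T1.
pose k t : \bar R := ((f (Num.max t 1) - f 0) / Num.max t 1)%:E.
have kmono : nondecreasing_fun k.
  move=> x y xy; rewrite /k lee_fin; apply: slope_mono.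
    by rewrite lt_max ltr01 orbT.
  by rewrite ge_max !le_max xy lexx orbT.
have ck := nondecreasing_cvge kmono.
set S := ereal_sup (range k) in ck.
have c0 : ((f 0 / t)%:E @[t --> +oo] --> 0%:E)%classic.
  apply: cvg_EFin; first by near=> t.
  have : ((fun t : R => t^-1) @ +oo%R --> (0:R))%classic.
    apply/gtr0_cvgV0; first by near=> t; near: t; apply: nbhs_pinfty_gt; rewrite num_real.
    exact: cvg_id.
  move=> h; have := cvgMr_tmp (b := f 0) h; rewrite mul0r.
  move=> H; apply: cvg_trans (H _); apply: near_eq_cvg; near=> t => /=.
  by rewrite mulrC.
have cg : ((f t / t)%:E @[t --> +oo] --> S)%classic.
  rewrite -[S]adde0; apply: cvg_trans (cvgeD _ ck c0); last first.
    by rewrite adde_defC fin_num_adde_defr.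
  apply: near_eq_cvg; near=> t => /=.
  have t1 : 1 <= t by near: t; apply: nbhs_pinfty_ge; rewrite num_real.
  rewrite /k max_l // -EFinD; congr (_%:E).
  by rewrite -mulrDl subrK.
rewrite /Dm (cvg_lim _ cg) // EFinD leeD2l //.
have -> : (((f T - f 0) / T)%:E = k T) by rewrite /k max_l.
by apply: ereal_sup_ubound; exists T.
Unshelve. all: by end_near. Qed.

Hypothesis hf1 : f 1 = 0.

Definition phi (a b : R) := if b == 0 then 0 else b * f (a / b).

Lemma phi_sub a1 b1 a2 b2 : 0 <= a1 -> 0 <= b1 -> 0 <= a2 -> 0 <= b2 ->
  (b1 = 0 -> a1 = 0) -> (b2 = 0 -> a2 = 0) ->
  phi (a1 + a2) (b1 + b2) <= phi a1 b1 + phi a2 b2.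
Proof.
move=> a10 b10 a20 b20 h1 h2; rewrite /phi.
have [E1|b1n] := eqVneq b1 0.
  by rewrite E1 h1 // (add0r b2) (add0r a2) add0r.

have [E2|b2n] := eqVneq b2 0.
  by rewrite E2 h2 // (addr0 b1) (addr0 a1) (negbTE b1n) addr0.
have b1p : 0 < b1 by rewrite lt_def b1n.
have b2p : 0 < b2 by rewrite lt_def b2n.
have bp : 0 < b1 + b2 by rewrite addr_gt0.
rewrite gt_eqF //.
set l := b1 / (b1 + b2).
have l0 : 0 <= l by rewrite divr_ge0 // ltW.
have l1 : l <= 1 by rewrite ler_pdivrMr // mul1r lerDl ltW.
have := hfconv (a1/b1) (a2/b2) l (divr_ge0 a10 (ltW b1p)) (divr_ge0 a20 (ltW b2p)) l0 l1.
have -> : l * (a1 / b1) + (1 - l) * (a2 / b2) = (a1 + a2) / (b1 + b2).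
  by rewrite /l; field; rewrite ?gt_eqF.
move=> h; have := ler_wpM2l (ltW bp) h.
have -> : (b1 + b2) * (l * f (a1 / b1) + (1 - l) * f (a2 / b2))
   = b1 * f (a1 / b1) + b2 * f (a2 / b2).
  by rewrite /l; field; rewrite gt_eqF.
by [].
Qed.

Lemma phi_sum (I : finType) (a b : I -> R) :
  (forall i, 0 <= a i) -> (forall i, 0 <= b i) -> (forall i, b i = 0 -> a i = 0) ->
  [/\ 0 <= \sum_i a i, 0 <= \sum_i b i, (\sum_i b i = 0 -> \sum_i a i = 0) &
     phi (\sum_i a i) (\sum_i b i) <= \sum_i phi (a i) (b i)].
Proof.
move=> ha hb hab.
apply: (big_rec3 (fun A B C => [/\ 0 <= A, 0 <= B, (B = 0 -> A = 0) & phi A B <= C])).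
  by split => //; rewrite /phi eqxx.
move=> i A B C _ [A0 B0 AB pC]; split.
- exact: addr_ge0.
- exact: addr_ge0.
- move=> /eqP; rewrite paddr_eq0 // => /andP[/eqP bi /eqP B1].
  by rewrite hab // AB // addr0.
- have H := phi_sub (a i) (b i) A B (ha i) (hb i) A0 B0 (hab i) AB.
  have H2 : phi (a i) (b i) + phi A B <= phi (a i) (b i) + C by rewrite lerD2l.
  exact: le_trans H H2.
Qed.

Lemma Df_phi (T : finType) (p q : T -> R) : Df f p q = \sum_x phi (p x) (q x).
Proof. by []. Qed.

Lemma Df_ge0 (T : finType) (p q : T -> R) : is_dist p -> is_dist q -> abs_cont p q ->
  0 <= Df f p q.
Proof.
move=> [p0 p1] [q0 q1] pq; have [_ _ _] := @phi_sum T p q p0 q0 pq.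
by rewrite p1 q1 /phi oner_eq0 divr1 mul1r hf1.
Qed.

Lemma phi_scale a b u : 0 <= u -> phi (a * u) (b * u) = u * phi a b.
Proof.
move=> u0; rewrite /phi.
have [->|un] := eqVneq u 0; first by rewrite !mulr0 eqxx mul0r.
have [->|bn] := eqVneq b 0; first by rewrite mul0r eqxx mulr0.
rewrite mulf_eq0 (negbTE un) (negbTE bn) /=.
have -> : (a * u) / (b * u) = a / b by field; rewrite un bn.
by rewrite mulrAC mulrC.
Qed.

Lemma scalar_bound r T : 0 <= r -> r <= T -> 1 < T ->
  f r <= Num.max (r - 1) 0 * (f T / (T - 1) + f 0) - f 0 * (r - 1).
Proof.
move=> r0 rT T1.
have [r1|r1] := leP r 1.
  rewrite max_r ?subr_le0 // mul0r sub0r.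
  have := hfconv 1 0 r ler01 (le_refl 0) r0 r1.
  rewrite mulr1 mulr0 addr0 hf1 mulr0 add0r => h.
  by apply: (le_trans h); rewrite mulrC -mulrN opprB.
rewrite max_l; last by rewrite subr_ge0 ltW.
have T0 : 0 < T - 1 by rewrite subr_gt0.
set l := (T - r) / (T - 1).
have l0 : 0 <= l by rewrite divr_ge0 ?subr_ge0 // ltW.
have l1 : l <= 1 by rewrite ler_pdivrMr // mul1r lerD2l lerN2 ltW.
have := hfconv 1 T l ler01 (le_trans ler01 (ltW T1)) l0 l1.
have -> : l * 1 + (1 - l) * T = r by rewrite /l; field; rewrite gt_eqF.
rewrite hf1 mulr0 add0r => h; apply: (le_trans h).
have -> : (r - 1) * (f T / (T - 1) + f 0) - f 0 * (r - 1) = (1 - l) * f T.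
  by rewrite /l; field; rewrite gt_eqF.
by [].
Qed.

Lemma term_bound (a b T : R) : 0 <= a -> 0 <= b -> (b = 0 -> a = 0) ->
  (b != 0 -> a / b <= T) -> 1 < T ->
  phi a b <= Num.max (a - b) 0 * (f T / (T - 1) + f 0) - f 0 * (a - b).
Proof.
move=> a0 b0 ab hT T1; rewrite /phi.
have [E|bn] := eqVneq b 0.
  by rewrite E ab // subrr max_r // mul0r mulr0 subrr.
have bp : 0 < b by rewrite lt_def bn.
have := @scalar_bound (a / b) T (divr_ge0 a0 b0) (hT bn) T1.
move=> /(ler_wpM2l (ltW bp)) /le_trans; apply.
have -> : Num.max (a - b) 0 = b * Num.max (a / b - 1) 0.
  have [h|h] := leP (a / b) 1.
    rewrite (max_r (x := a / b - 1)) ?subr_le0 // mulr0 max_r //.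
    by rewrite subr_le0; move: h; rewrite ler_pdivrMr // mul1r.
  rewrite (max_l (x := a / b - 1)) ?subr_ge0 ?ltW // max_l.
    by rewrite mulrBr mulrCA divff // mulr1 mulr1.
  by rewrite subr_ge0; move: h; rewrite ltr_pdivlMr // mul1r => /ltW.
have -> : a - b = b * (a / b - 1) by rewrite mulrBr mulrCA divff // !mulr1.
by rewrite mulrBr !mulrA [b * f 0]mulrC.
Qed.

Lemma Df_dich (X : finType) (p q : X -> R) : is_dist p -> is_dist q -> abs_cont p q ->
  Df f p q = 0 \/ ((Df f p q)%:E < Dm f)%E.
Proof.
move=> [p0 p1] [q0 q1] pq.
have D0 := @Df_ge0 X p q (conj p0 p1) (conj q0 q1) pq.
have [E|Dn] := eqVneq (Df f p q) 0; [by left | right].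
have Dp : 0 < Df f p q by rewrite lt_def Dn.
set TV := \sum_x Num.max (p x - q x) 0.
set M := \sum_x (if q x == 0 then 0 else p x / q x).
have TV0 : 0 <= TV by apply: sumr_ge0 => x _; rewrite le_max lexx orbT.
have M0 : forall x, 0 <= (if q x == 0 then 0 else p x / q x).
  by move=> x; case: ifP => // _; rewrite divr_ge0.
have TV1 : TV < 1.
  have e : TV + \sum_x Num.min (p x) (q x) = 1.
    rewrite -p1 -big_split /=; apply: eq_bigr => x _.
    have [h|h] := leP (p x) (q x).
      by rewrite max_r ?subr_le0 // add0r.
    by rewrite max_l ?subrK // subr_ge0 ltW.
  have mpos : 0 < \sum_x Num.min (p x) (q x).
    rewrite lt_def sumr_ge0 ?andbT; last by move=> x _; rewrite le_min p0 q0.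
    apply/negP => /eqP /psumr_eq0P H.
    have {}H : forall i, Num.min (p i) (q i) = 0.
      by move=> i; apply: H => // j _; rewrite le_min p0 q0.
    have : \sum_x p x = 0.
      apply: big1 => x _; have := H x.
      by have [h|h] := leP (p x) (q x) => // /pq.
    by rewrite p1 => /eqP; rewrite oner_eq0.
  lra.
set T := 2 / (1 - TV) + M.
have oTV : 0 < 1 - TV by rewrite subr_gt0.
have T2 : 2 <= T - M by rewrite /T addrK ler_pdivlMr // mulrBr mulr1; lra.
have Mge : 0 <= M by apply: sumr_ge0 => x _.
have T1 : 1 < T by lra.
have hT : forall x, q x != 0 -> p x / q x <= T.
  move=> x qn; apply: (@le_trans _ _ M); last by lra.
  rewrite /M (bigD1 x) //= (negbTE qn) lerDl; apply: sumr_ge0 => y _; exact: M0.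
set K := f T / (T - 1) + f 0.
have DK : Df f p q <= TV * K.
  have : Df f p q <= \sum_x (Num.max (p x - q x) 0 * K - f 0 * (p x - q x)).
    rewrite Df_phi; apply: ler_sum => x _; apply: term_bound => //.
    exact: pq. exact: hT.
  rewrite sumrB -mulr_sumr sumrB p1 q1 subrr mulr0 subr0 -mulr_suml //.
have TVK : 0 < TV * K by exact: lt_le_trans Dp DK.
have Kp : 0 < K.
  rewrite ltNge; apply/negP => K0; move: TVK; rewrite ltNge mulr_ge0_le0 //.
have Tp : 0 < T by lra.
have key : Df f p q < f 0 + (f T - f 0) / T.
  have -> : f 0 + (f T - f 0) / T = K * (T - 1) / T.
    by rewrite /K; field; rewrite ?gt_eqF // subr_gt0.
  apply: (le_lt_trans DK); rewrite ltr_pdivlMr //.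
  suff h : TV * T < T - 1 by nra.
  have : TV * T <= T - 2.
    have : 2 <= T * (1 - TV).
      have -> : T * (1 - TV) = 2 + M * (1 - TV).
        by rewrite /T; field; rewrite gt_eqF.
      by rewrite lerDl mulr_ge0 // ltW.
    lra.
  lra.
apply: (lt_le_trans _ (@Dm_ge T (ltW T1))); by rewrite lte_fin.
Qed.

Lemma dpi (X : finType) (P Q U : X -> R) : is_dist P -> is_dist Q -> abs_cont P Q ->
  (forall x, 0 <= U x <= 1) ->
  0 <= Df f (Bern (\sum_x P x * U x)) (Bern (\sum_x Q x * U x)) <= Df f P Q.
Proof.
move=> [p0 p1] [q0 q1] pq hU.
have U0 x : 0 <= U x by case/andP: (hU x).
have U1 x : 0 <= 1 - U x by case/andP: (hU x) => _; rewrite subr_ge0.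
have e1 (W : X -> R) : \sum_x W x = 1 -> 1 - \sum_x W x * U x = \sum_x W x * (1 - U x).
  move=> h; rewrite -{1}h -sumrB; apply: eq_bigr => x _; ring.
have ac (V : X -> R) : (forall x, 0 <= V x) -> forall x, Q x * V x = 0 -> P x * V x = 0.
  move=> V0 x /eqP; rewrite mulf_eq0 => /orP[/eqP/pq -> | /eqP ->]; by rewrite ?mul0r ?mulr0.
have [A0 B0 AB h1] := @phi_sum X (fun x => P x * U x) (fun x => Q x * U x)
  (fun x => mulr_ge0 (p0 x) (U0 x)) (fun x => mulr_ge0 (q0 x) (U0 x)) (ac U U0).
have [A0' B0' AB' h2] := @phi_sum X (fun x => P x * (1 - U x)) (fun x => Q x * (1 - U x))
  (fun x => mulr_ge0 (p0 x) (U1 x)) (fun x => mulr_ge0 (q0 x) (U1 x)) (ac _ U1).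
rewrite /Df big_bool /= -/(phi _ _) -/(phi _ _) (e1 _ p1) (e1 _ q1).
apply/andP; split.
  have := phi_sub _ _ _ _ A0 B0 A0' B0' AB AB'.
  rewrite -!big_split /=.
  have -> : \sum_i (P i * U i + P i * (1 - U i)) = 1.
    by apply: etrans p1; apply: eq_bigr => x _; ring.
  have -> : \sum_i (Q i * U i + Q i * (1 - U i)) = 1.
    by apply: etrans q1; apply: eq_bigr => x _; ring.
  by rewrite /phi oner_eq0 divr1 mul1r hf1.
apply: le_trans (lerD h1 h2) _.
rewrite -big_split /=; apply: ler_sum => x _.
rewrite !phi_scale // -mulrDl subrKC mul1r.
by rewrite /phi.
Qed.
End S.

Section Iid.
Variable R : realType.
Variable X : finType.

Definition fcons n (x : X) (ys : {ffun 'I_n -> X}) : {ffun 'I_n.+1 -> X} :=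
  [ffun i => if unlift ord0 i is Some j then ys j else x].
Arguments fcons {n}.

Lemma iid_cons (p : X -> R) n x (ys : {ffun 'I_n -> X}) : iid p (fcons x ys) = p x * iid p ys.
Proof.
rewrite /iid big_ord_recl ffunE unlift_none; congr (_ * _).
by apply: eq_bigr => i _; rewrite ffunE liftK.
Qed.

Lemma sum_cons n (F : {ffun 'I_n.+1 -> X} -> R) :
  \sum_xs F xs = \sum_(z : X * {ffun 'I_n -> X}) F (fcons z.1 z.2).
Proof.
rewrite (reindex (fun z : X * {ffun 'I_n -> X} => fcons z.1 z.2)) //.
apply: onW_bij.
exists (fun xs : {ffun 'I_n.+1 -> X} => (xs ord0, [ffun j => xs (lift ord0 j)])).
  move=> [x ys] /=; congr pair; first by rewrite ffunE unlift_none.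
  by apply/ffunP => j; rewrite !ffunE liftK.
move=> xs; apply/ffunP => i; rewrite ffunE; case: unliftP => [j ->|->] /=.
  by rewrite ffunE.
by [].
Qed.

Lemma iid_dist (p : X -> R) n : is_dist p -> is_dist (iid (n:=n) p).
Proof.
move=> [p0 p1]; split.
  by move=> xs; rewrite /iid; apply: prodr_ge0 => i _.
have := bigA_distr_bigA (fun (i : 'I_n) (j : X) => p j).
rewrite /iid /= => <-.
by rewrite big1 // => i _.
Qed.

Lemma iid_ac (p q : X -> R) n : abs_cont p q -> abs_cont (iid (n:=n) p) (iid (n:=n) q).
Proof.
move=> pq xs /eqP; rewrite /iid prodf_seq_eq0 => /hasP [i _ /andP [_ /eqP qi]].
by rewrite (bigD1 i) //= pq // mul0r.
Qed.

Lemma Df_cons (f : R -> R) (p q : X -> R) n :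
  Df f (iid (n:=n.+1) p) (iid (n:=n.+1) q) = Df f (prod_dist p (iid (n:=n) p)) (prod_dist q (iid (n:=n) q)).
Proof.
by rewrite /Df sum_cons; apply: eq_bigr => -[x ys] _; rewrite /prod_dist !iid_cons.
Qed.

Lemma G_iid (f G : R -> R) (hf1 : f 1 = 0) (hG0 : G 0 = 0) (hsub : div_subadditive G f)
  (p q : X -> R) (hp : is_dist p) (hq : is_dist q) (hpq : abs_cont p q) n :
  G (Df f (iid (n:=n) p) (iid (n:=n) q)) <= n%:R * G (Df f p q).
Proof.
elim: n => [|n IH].
  rewrite /Df big1 ?hG0 ?mul0r // => xs _.
  by rewrite /iid !big_ord0 oner_eq0 divr1 hf1 mulr0.
rewrite Df_cons.
apply: le_trans (hsub _ _ _ _ _ _ hp hq (iid_dist p n hp) (iid_dist q n hq) hpq (iid_ac p q n hpq)) _.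
by rewrite -addn1 natrD mulrDl mul1r addrC lerD2r.
Qed.
End Iid.

Theorem theorem6 (R : realType) (f G : R -> R)
  (hfconv : convex_on_nonneg f) (hf1 : f 1 = 0)
  (hG0 : G 0 = 0)
  (hGnn : forall x : R, 0 <= x -> (x%:E < Dm f)%E -> 0 <= G x)
  (hGmono : forall x y : R, 0 <= x -> x <= y -> (y%:E < Dm f)%E -> G x <= G y)
  (hsub : div_subadditive G f)
  (X : finType) (pX qX : X -> R)
  (hp : is_dist pX) (hq : is_dist qX) (hpq : abs_cont pX qX)
  (n : nat) (U : {ffun 'I_n -> X} -> R)
  (hU : forall xs, 0 <= U xs <= 1) :
  let alpha := \sum_(xs : {ffun 'I_n -> X}) iid pX xs * U xs in
  let beta := \sum_(xs : {ffun 'I_n -> X}) iid qX xs * U xs in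
  G (Df f (Bern alpha) (Bern beta)) <= n%:R * G (Df f pX qX).
Proof.
cbv zeta.
have hpn := @iid_dist _ _ pX n hp; have hqn := @iid_dist _ _ qX n hq; have hpqn := @iid_ac _ _ pX qX n hpq.
have /andP [h0 h1] := @dpi _ f hfconv hf1 _ _ _ U hpn hqn hpqn hU.
have G1 : 0 <= G (Df f pX qX).
  have [E|lt] := @Df_dich _ f hfconv hf1 _ _ _ hp hq hpq; first by rewrite E hG0.
  exact: hGnn (@Df_ge0 R f hfconv hf1 X pX qX hp hq hpq) lt.
have [E|lt] := @Df_dich _ f hfconv hf1 _ _ _ hpn hqn hpqn.
  have -> : Df f (Bern (\sum_xs iid pX xs * U xs)) (Bern (\sum_xs iid qX xs * U xs)) = 0 by apply/le_anti; rewrite h0 andbT (le_trans h1) // E.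
  by rewrite hG0 mulr_ge0.
exact: le_trans (hGmono _ _ h0 h1 lt) (@G_iid _ _ f G hf1 hG0 hsub _ _ hp hq hpq n).
Qed.
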